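(* Let $A\in\mathbb{C}^{m\times n}$ with $\mathrm{rank}(A^{\sim}AA^{\sim})=\mathrm{rank}(A)$ (so that $A^{\mathfrak{m}}$ exists), and let $X\in\mathbb{C}^{n\times m}$. Then the following are equivalent: (1) $X=A^{\mathfrak{m}}$; (2) there exist $B\in\mathbb{C}^{m\times m}$ and $C\in\mathbb{C}^{n\times n}$ such that $AXA=A$, $X=A^{\sim}B$ and $X=CA^{\sim}$. Moreover, such $B$ and $C$ are given by $$B=(A^{\sim})^{(1)}A^{\mathfrak{m}}+(I_m-(A^{\sim})^{(1)}A^{\sim})Y,\qquad C=A^{\mathfrak{m}}(A^{\sim})^{(1)}+Z(I_n-A^{\sim}(A^{\sim})^{(1)}),$$ where $Y\in\mathbb{C}^{m\times m}$ and $Z\in\mathbb{C}^{n\times n}$ are arbitrary and $(A^{\sim})^{(1)}$ is a $\{1\}$-inverse of $A^{\sim}$.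
   Context: For a positive integer $k$, the Minkowski metric matrix of order $k$ is $G_k=\mathrm{diag}(1,-I_{k-1})$ (with $G_1=(1)$). For $A\in\mathbb{C}^{m\times n}$, the Minkowski adjoint is $A^{\sim}=G_nA^*G_m$, where $A^*$ is the conjugate transpose. The Minkowski inverse of $A$, denoted $A^{\mathfrak{m}}$, is the (unique) matrix $X\in\mathbb{C}^{n\times m}$ with $AXA=A$, $XAX=X$, $(AX)^{\sim}=AX$, $(XA)^{\sim}=XA$, when it exists. A $\{1\}$-inverse of a matrix $M$ is any $M^{(1)}$ with $MM^{(1)}M=M$. *)

(* Defs.v *)
(* Scalars: an arbitrary numClosedFieldType C (e.g. the complex
   numbers), with conjugation Num.conj. *)
From HB Require Import structures.
From mathcomp Require Import all_boot all_order all_algebra.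
Set Implicit Arguments. Unset Strict Implicit. Unset Printing Implicit Defensive.
Import Order.TTheory GRing.Theory Num.Theory.
Local Open Scope ring_scope.

Definition minkG (C : numClosedFieldType) (k : nat) : 'M[C]_k :=
  diag_mx (\row_(i < k) (if val i == 0%N then 1 else -1)).

Definition conjT (C : numClosedFieldType) (m n : nat) (A : 'M[C]_(m, n)) : 'M[C]_(n, m) :=
  \matrix_(i < n, j < m) Num.conj (A j i).

Definition madj (C : numClosedFieldType) (m n : nat) (A : 'M[C]_(m, n)) : 'M[C]_(n, m) :=
  minkG C n *m conjT A *m minkG C m.

Definition is_minkowski_inverse (C : numClosedFieldType) (m n : nat)
  (A : 'M[C]_(m, n)) (X : 'M[C]_(n, m)) : Prop :=
  [/\ A *m X *m A = A, X *m A *m X = X,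
      madj (A *m X) = A *m X & madj (X *m A) = X *m A].

Definition is_inv1 (C : numClosedFieldType) (p q : nat)
  (M : 'M[C]_(p, q)) (M1 : 'M[C]_(q, p)) : Prop :=
  M *m M1 *m M = M.

(* Main.v *)
Require Import Defs.
From HB Require Import structures.
From mathcomp Require Import all_boot all_order all_algebra.
Import Order.TTheory GRing.Theory Num.Theory.
Local Open Scope ring_scope.

Section H.
Variable C : numClosedFieldType.

Lemma conjTE m n (A : 'M[C]_(m,n)) : conjT A = (map_mx Num.conj A)^T.
Proof. by apply/matrixP=> i j; rewrite !mxE. Qed.

Lemma conjTM m n p (A : 'M[C]_(m,n)) (B : 'M[C]_(n,p)) :
  conjT (A *m B) = conjT B *m conjT A.
Proof. by rewrite !conjTE map_mxM trmx_mul. Qed.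

Lemma conjTK m n (A : 'M[C]_(m,n)) : conjT (conjT A) = A.
Proof. by apply/matrixP=> i j; rewrite !mxE conjCK. Qed.

Lemma conjG k : conjT (minkG C k) = minkG C k.
Proof.
apply/matrixP=> i j; rewrite !mxE; case: (eqVneq i j) => [->|ne].
  by case: ifP; rewrite ?rmorphN rmorph1.
by rewrite !mulr0n rmorph0.
Qed.
Lemma GG k : minkG C k *m minkG C k = 1%:M.
Proof.
by rewrite /minkG mulmx_diag; apply/matrixP=> i j; rewrite !mxE;
  case: ifP; rewrite ?mulrNN mulr1.
Qed.

Lemma madjM m n p (A : 'M[C]_(m,n)) (B : 'M[C]_(n,p)) :
  madj (A *m B) = madj B *m madj A.
Proof.
by rewrite /madj conjTM !mulmxA -[_ *m minkG C n *m minkG C n]mulmxA GG mulmx1.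
Qed.

Lemma madjK m n (A : 'M[C]_(m,n)) : madj (madj A) = A.
Proof.
rewrite /madj !conjTM conjTK !conjG !mulmxA GG mul1mx -mulmxA GG mulmx1 //.
Qed.

Lemma rank_madj m n (A : 'M[C]_(m,n)) : (\rank (madj A) <= \rank A)%N.
Proof.
rewrite /madj; apply: leq_trans (mxrankM_maxl _ _) _.
apply: leq_trans (mxrankM_maxr _ _) _.
by rewrite conjTE mxrank_tr mxrank_map.
Qed.
End H.

Theorem theorem5p7 (C : numClosedFieldType) (m n : nat)
  (A : 'M[C]_(m, n)) (X : 'M[C]_(n, m)) :
  \rank (madj A *m A *m madj A) = \rank A ->
  (is_minkowski_inverse A X <->
     exists (B : 'M[C]_m) (Cm : 'M[C]_n),
       [/\ A *m X *m A = A, X = madj A *m B & X = Cm *m madj A])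
  /\
  (is_minkowski_inverse A X ->
     forall (A1 : 'M[C]_(m, n)) (Y : 'M[C]_m) (Z : 'M[C]_n),
       is_inv1 (madj A) A1 ->
       let B := A1 *m X + (1%:M - A1 *m madj A) *m Y in
       let Cm := X *m A1 + Z *m (1%:M - madj A *m A1) in
       [/\ A *m X *m A = A, X = madj A *m B & X = Cm *m madj A]).
Proof.
move=> hr.
have fwd : is_minkowski_inverse A X ->
   X = madj A *m (madj X *m X) /\ X = X *m madj X *m madj A.
  case=> h1 h2 h3 h4; split.
    by rewrite mulmxA -madjM h4 h2.
  by rewrite -mulmxA -madjM h3 mulmxA h2.
split; last first.
  move=> hM A1 Y Z hA1 B Cm; have [eB eC] := fwd hM.
  case: hM => h1 _ _ _; rewrite /is_inv1 in hA1; rewrite /B /Cm.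
  set W := madj A in eB eC hA1 *; set Xs := madj X in eB eC *.
  clearbody W Xs; split => //.
    rewrite mulmxDr !mulmxA mulmxBr mulmx1 mulmxA hA1 subrr mul0mx addr0.
    by rewrite {2}eB !mulmxA hA1 -mulmxA -eB.
  rewrite mulmxDl -!mulmxA mulmxBl mul1mx !mulmxA hA1 subrr mulmx0 addr0.
  by rewrite {2}eC -!mulmxA [W *m (_ *m _)]mulmxA hA1 !mulmxA -eC.
split.
  move=> hM; have [eB eC] := fwd hM; case: hM => h1 _ _ _.
  by exists (madj X *m X), (X *m madj X).
case=> B [Cm [h1 hB hC]].
rewrite /is_minkowski_inverse.
have g1 : madj (madj A *m A *m X) = madj X *m madj A *m A by rewrite madjM (@madjM _ _ _ _ (madj A) A) madjK mulmxA.
have g2 : madj (X *m A *m madj A) = A *m madj A *m madj X by rewrite madjM madjK (@madjM _ _ _ _ X A) mulmxA.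
have g3 : madj (A *m X) = madj X *m madj A by rewrite madjM.
have g4 : madj (X *m A) = madj A *m madj X by rewrite madjM.
have g5 : madj (madj A) = A by rewrite madjK.
rewrite g3 g4.
have rW : \rank (madj A) = \rank A.
  apply/eqP; rewrite eqn_leq rank_madj /= -{1}hr; exact: mxrankM_maxr.
set W := madj A in hr hB hC rW g1 g2 g3 g4 g5 *; set Xs := madj X in g1 g2 g3 g4 *.
clearbody W Xs.
have [V eV] : exists V : 'M[C]_n, W = V *m (W *m A *m W).
  apply/submxP.
  have s : (W *m A *m W <= W)%MS by apply: submxMl.
  have : (W *m A *m W == W)%MS by rewrite -(mxrank_leqif_eq s) hr rW.
  by case/andP.
have [U eU] : exists U : 'M[C]_m, W = W *m A *m W *m U.
  have s : ((W *m A *m W)^T <= W^T)%MS.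
    by rewrite -mulmxA trmx_mul; apply: submxMl.
  have : ((W *m A *m W)^T == W^T)%MS.
    by rewrite -(mxrank_leqif_eq s) !mxrank_tr hr rW.
  case/andP=> _ /submxP[D eD]; exists D^T.
  by apply: trmx_inj; rewrite trmx_mul trmxK.
have e1 : X = X *m A *m W *m U by rewrite {1}hC {1}eU !mulmxA -hC.
have e2 : W *m A *m X = W.
  by rewrite {1}e1 !mulmxA -(mulmxA W) -(mulmxA W) h1 -eU.
have e3 : X = V *m W *m A *m X by rewrite {1}hB {1}eV !mulmxA -[_ *m W *m B]mulmxA -hB.
have e4 : X *m A *m W = W.
  by rewrite {1}e3 -(mulmxA (V *m W)) -(mulmxA (V *m W)) h1 -(mulmxA V) -(mulmxA V) -eV.
have f1 : Xs *m W *m A = A by rewrite -g1 e2 g5.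
have f2 : A *m W *m Xs = A by rewrite -g2 e4 g5.
split => //.
- by rewrite {3}hC -{1}e2 !mulmxA -hC.
- by rewrite -{1}f1 -!mulmxA [W *m (A *m X)]mulmxA e2.
- by rewrite -{1}f2 !mulmxA e4.
Qed.
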